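(* (i) For $n\ge 3$, $\chi_{dom}(T_n)=n+1$. (ii) For $n\ge 2$, $\chi_{dom}(O_n)=\chi_{dom}(Q_n)=n+1$.
   Context: A dominated coloring of a graph is a proper coloring in which every color class is dominated by at least one vertex, i.e. for each color class $C$ there is a vertex adjacent to every vertex of $C$; $\chi_{dom}$ denotes the minimum number of colors in a dominated coloring. A cactus is a connected graph in which every block is an edge or a cycle. A chain triangular cactus of length $n$, $T_n$, is a cactus whose $n$ blocks are all triangles, each triangle has at most two cut-vertices, and each cut-vertex is shared by exactly two triangles (all such graphs of length $n$ are isomorphic). A square cactus chain of length $n$ is defined in the same way with every block a $4$-cycle; an internal square is an ortho-square if its two cut-vertices are adjacent and a para-square if they are not adjacent. $Q_n$ is the para-chain of length $n$ (all internal squares are para-squares) and $O_n$ is the ortho-chain of length $n$ (all internal squares are ortho-squares). *)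

(* Defs.v *)
From mathcomp Require Import all_boot.
Set Implicit Arguments. Unset Strict Implicit. Unset Printing Implicit Defensive.

Section Dom.
Variable T : finType.
Variable adj : rel T.  (* simple graph: symmetric irreflexive adjacency *)

Definition proper_coloring (k : nat) (f : T -> 'I_k) : Prop :=
  forall u v, adj u v -> f u != f v.

(* Dominated coloring: proper, and every color class C is dominated,
   i.e. some vertex is adjacent to every vertex of C. (Empty classes are
   vacuously dominated, so a k-coloring uses at most k colors.) *)
Definition dominated_coloring (k : nat) (f : T -> 'I_k) : Prop :=
  proper_coloring f /\ forall c : 'I_k, exists v : T, forall u, f u = c -> adj v u.

Definition chi_dom_is (m : nat) : Prop :=
  (exists f : T -> 'I_m, dominated_coloring f) /\
  (forall (k : nat) (f : T -> 'I_k), dominated_coloring f -> m <= k).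
End Dom.

Definition sym_adj (N : nat) (e : nat -> nat -> bool) : rel 'I_N :=
  fun x y => e x y || e y x.

(* ---------- Chain triangular cactus T_n ----------
   vertices 0..2n; triangle i (0 <= i < n) is {2i, 2i+1, 2i+2};
   cut vertices 2i (1 <= i <= n-1). Edges (u < v): v = u+1, or v = u+2 with u even. *)
Definition tri_e (u v : nat) : bool := (v == u.+1) || ((v == u.+2) && ~~ odd u).
Definition T_adj (n : nat) : rel 'I_(2 * n).+1 := sym_adj tri_e.

(* ---------- Square chains: vertices 0..3n, a_i = 3i (0 <= i <= n) ----------
   square i consists of 3i, 3i+1, 3i+2, 3i+3; cut vertices a_1..a_{n-1}. *)

(* Para-chain Q_n: square i is the 4-cycle 3i - 3i+1 - 3i+3 - 3i+2 - 3i,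
   so its cut vertices 3i and 3i+3 are not adjacent. *)
Definition para_e (u v : nat) : bool :=
  [|| (u %% 3 == 0) && ((v == u + 1) || (v == u + 2)),
      (u %% 3 == 1) && (v == u + 2)
    | (u %% 3 == 2) && (v == u + 1)].
Definition Q_adj (n : nat) : rel 'I_(3 * n).+1 := sym_adj para_e.

(* Ortho-chain O_n: square i is the 4-cycle 3i - 3i+3 - 3i+1 - 3i+2 - 3i,
   so its cut vertices 3i and 3i+3 are adjacent. *)
Definition ortho_e (u v : nat) : bool :=
  ((u %% 3 == 0) && ((v == u + 2) || (v == u + 3)))
  || ((u %% 3 == 1) && ((v == u + 1) || (v == u + 2))).
Definition O_adj (n : nat) : rel 'I_(3 * n).+1 := sym_adj ortho_e.
Arguments T_adj n : clear implicits.
Arguments Q_adj n : clear implicits.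
Arguments O_adj n : clear implicits.

(* Main.v *)
Require Import Defs.
From mathcomp Require Import all_boot zify.

Lemma upper (N m : nat) (e : nat -> nat -> bool) (col dom : nat -> nat) :
  (forall u, u < N.+1 -> col u <= m) ->
  (forall c, c <= m -> dom c < N.+1) ->
  (forall u v, u < N.+1 -> v < N.+1 -> e u v || e v u -> col u != col v) ->
  (forall u c, u < N.+1 -> c <= m -> col u = c -> e (dom c) u || e u (dom c)) ->
  exists f : 'I_N.+1 -> 'I_m.+1, dominated_coloring (sym_adj e) f.
Proof.
move=> Hc Hd Hp Hdom.
have Hc' : forall u : 'I_N.+1, col u < m.+1 by move=> u; rewrite ltnS Hc.
exists (fun u => inord (col u)); split.
  move=> u v Huv; apply/negP => /eqP/(congr1 (@nat_of_ord _)).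
  rewrite !inordK //; apply/eqP; exact: Hp.
move=> c; exists (inord (dom c)) => u /(congr1 (@nat_of_ord _)).
rewrite inordK // => Hu.
have Hdc : dom c < N.+1 by apply: Hd; rewrite -ltnS.
rewrite /sym_adj inordK //.
by apply: Hdom => //; rewrite -ltnS.
Qed.

Lemma lower (N k : nat) (e : nat -> nat -> bool) (f : 'I_N -> 'I_k) :
  dominated_coloring (sym_adj e) f ->
  exists d : 'I_k -> 'I_N,
   (forall u v, f u = f v -> ~~ (e u v || e v u)) /\
   (forall u, e (d (f u)) u || e u (d (f u))).
Proof.
move=> [Hp Hd]; have [d Hd'] := fin_all_exists Hd.
exists d; split.
  move=> u v Huv; apply/negP => H; move: (Hp u v H); by rewrite Huv eqxx.
by move=> u; apply: Hd'.
Qed.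

Definition colT (u : nat) : nat :=
  if odd u then (if u./2 == 0 then 1 else if u./2 == 1 then 0 else u./2 + 1)
  else (if u./2 == 0 then 0 else if u./2 == 1 then 2 else if u./2 == 2 then 1 else u./2 - 1).
Definition domT (n c : nat) : nat :=
  if c <= 1 then 2 else if c == 2 then 4 else if c == n then 2 * n - 2 else 2 * c.

Lemma T_upper n : 3 <= n -> exists f : 'I_(2 * n).+1 -> 'I_n.+1, dominated_coloring (T_adj n) f.
Proof.
move=> Hn; apply: (@upper _ _ _ colT (domT n)).
- move=> u Hu; rewrite /colT; repeat case: ifP => ?; lia.
- move=> c Hc; rewrite /domT; repeat case: ifP => ?; lia.
- move=> u v Hu Hv; rewrite /tri_e /colT; repeat case: ifP => ?; lia.
- move=> u c Hu Hc; rewrite /tri_e /colT /domT; repeat case: ifP => ?; lia.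
Qed.

Lemma T_lower n k (f : 'I_(2 * n).+1 -> 'I_k) : dominated_coloring (T_adj n) f -> n.+1 <= k.
Proof.
move=> /lower [d [Hp Hd]].
have inj : injective (fun u => (f u, u < d (f u))).
  move=> u v [Hf Hb]; apply: val_inj => /=.
  have H1 := Hd u; have H2 := Hd v; have H3 := Hp u v Hf.
  rewrite -Hf in H2 Hb; move: H1 H2 H3 Hb; rewrite /tri_e; lia.
have := leq_card _ inj; rewrite card_prod !card_ord card_bool; lia.
Qed.

Definition colO (n u : nat) : nat :=
  if u %% 3 == 0 then (if u %/ 3 <= n - 2 then u %/ 3 + 1 else if u %/ 3 == n - 1 then n else n - 1)
  else if u %% 3 == 1 then u %/ 3 + 1 else u %/ 3.

Lemma O_upper n : 2 <= n -> exists f : 'I_(3 * n).+1 -> 'I_n.+1, dominated_coloring (O_adj n) f.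
Proof.
move=> Hn; apply: (@upper _ _ _ (colO n) (fun c => 3 * c)).
- move=> u Hu; rewrite /colO; repeat case: ifP => ?; lia.
- move=> c Hc; lia.
- move=> u v Hu Hv; rewrite /ortho_e /colO; repeat case: ifP => ?; lia.
- move=> u c Hu Hc; rewrite /ortho_e /colO; repeat case: ifP => ?; lia.
Qed.

Definition colQ (n u : nat) : nat :=
  if u %% 3 == 0 then (u %/ 3)./2 else n./2 + 1 + (u %/ 3)./2.
Definition domQ (n c : nat) : nat :=
  if c <= n./2 then (if 2 * c < n then 6 * c + 1 else 3 * n - 2) else 3 * (2 * (c - n./2 - 1) + 1).

Lemma Q_upper n : 2 <= n -> exists f : 'I_(3 * n).+1 -> 'I_n.+1, dominated_coloring (Q_adj n) f.
Proof.
move=> Hn; apply: (@upper _ _ _ (colQ n) (domQ n)).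
- move=> u Hu; rewrite /colQ; repeat case: ifP => ?; lia.
- move=> c Hc; rewrite /domQ; repeat case: ifP => ?; lia.
- move=> u v Hu Hv; rewrite /para_e /colQ; repeat case: ifP => ?; lia.
- move=> u c Hu Hc; rewrite /para_e /colQ /domQ; repeat case: ifP => ?; lia.
Qed.

Lemma adjO_mid q (b : bool) y :
  (ortho_e (3 * q + b + 1) y || ortho_e y (3 * q + b + 1)) =
  if b then (y == 3 * q) || (y == 3 * q + 1) else (y == 3 * q + 2) || (y == 3 * q + 3).
Proof. rewrite /ortho_e; case: b; apply/idP/idP; lia. Qed.
Lemma adjQ_mid q (b : bool) y :
  (para_e (3 * q + b + 1) y || para_e y (3 * q + b + 1)) = (y == 3 * q) || (y == 3 * q + 3).
Proof. rewrite /para_e; case: b; apply/idP/idP; lia. Qed.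
Lemma adjQ_A i y :
  (para_e (3 * i) y || para_e y (3 * i)) =
   [|| y == 3 * i + 1, y == 3 * i + 2 | (0 < i) && ((y + 1 == 3 * i) || (y + 2 == 3 * i))].
Proof. rewrite /para_e; apply/idP/idP; lia. Qed.

Definition vM (n m : nat) : 'I_(3 * n).+1 := inord (m + m./2 + 1).
Definition vA (n i : nat) : 'I_(3 * n).+1 := inord (3 * i).

Lemma vM_val n m : m < 2 * n -> nat_of_ord (vM n m) = 3 * m./2 + odd m + 1.
Proof. move=> H; rewrite /vM inordK //; lia. Qed.
Lemma vA_val n i : i < n.+1 -> nat_of_ord (vA n i) = 3 * i.
Proof. move=> H; rewrite /vA inordK //; lia. Qed.

Lemma O_lower n k (f : 'I_(3 * n).+1 -> 'I_k) : 2 <= n -> dominated_coloring (O_adj n) f -> n.+1 <= k.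
Proof.
case: n f => [|[|n']] f //= _ /lower [d [Hp Hd]].
set n := n'.+2.
pose h (m : 'I_(2 * n)) : ('I_k + 'I_n'.+1)%type :=
  if odd m && (3 <= m) && (f (vM n m) == f (vM n (m - 3))) then inr (inord ((m - 3)./2))
  else inl (f (vM n m)).
have inj : injective h.
  move=> m m'; rewrite /h; have Hm := ltn_ord m; have Hm' := ltn_ord m'.
  case: ifP => C1; case: ifP => C2 //.
  - move=> [] /(congr1 (@nat_of_ord _)); rewrite !inordK; try lia.
    move=> E; apply: val_inj => /=; lia.
  - move=> [Hf].
    have H1 := Hd (vM n m); have H2 := Hd (vM n m'); have H3 := Hp _ _ Hf.
    rewrite -Hf in H2; rewrite orbC vM_val // adjO_mid in H1.
    rewrite orbC vM_val // adjO_mid in H2.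
    rewrite !vM_val // adjO_mid in H3.
    have key : nat_of_ord m = m' \/ (odd m /\ 3 <= m /\ nat_of_ord m' = m - 3)
         \/ (odd m' /\ 3 <= m' /\ nat_of_ord m = m' - 3).
      move: H1 H2 H3; case Eo: (odd m); case Eo': (odd m'); lia.
    case: key => [E | [[Ho [H3m E]] | [Ho [H3m E]]]].
    + exact: val_inj.
    + by rewrite Ho H3m -E Hf eqxx in C1.
    + by rewrite Ho H3m -E -Hf eqxx in C2.
have := leq_card _ inj; rewrite card_sum !card_ord; lia.
Qed.

Lemma Q_lower n k (f : 'I_(3 * n).+1 -> 'I_k) : dominated_coloring (Q_adj n) f -> n.+1 <= k.
Proof.
move=> /lower [d [Hp Hd]].
pose h (x : ('I_n.+1 + 'I_n.+1 + 'I_(2 * n))%type) : ('I_k * (bool * bool))%type :=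
  match x with
  | inl (inl i) => (f (vA n i), (false, odd i))
  | inl (inr i) => (f (vA n i), (true, odd i))
  | inr m => (f (vM n m), (odd m./2, odd m))
  end.
have inj : injective h.
{ move=> x y E; case: x E => [[i|i]|m]; case: y => [[j|j]|m'] E.
  all: have Hf := congr1 fst E; have Hs := congr1 snd E; move: Hs => /= Hs.
  all: have Hb1 := congr1 fst Hs; have Hb2 := congr1 snd Hs; move: Hf Hb1 Hb2 => /= Hf Hb1 Hb2.
  all: first [have H1 := Hd (vA n i) | have H1 := Hd (vM n m)].
  all: first [have H2 := Hd (vA n j) | have H2 := Hd (vM n m')].
  all: rewrite -Hf in H2; rewrite orbC in H1; rewrite orbC in H2.
  all: rewrite ?vA_val ?vM_val // ?adjQ_A ?adjQ_mid in H1.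
  all: rewrite ?vA_val ?vM_val // ?adjQ_A ?adjQ_mid in H2.
  all: first [ by exfalso; lia
             | by congr (inl (inl _)); apply: val_inj => /=; lia
             | by congr (inl (inr _)); apply: val_inj => /=; lia
             | by congr inr; apply: val_inj => /=; lia ]. }
have := leq_card _ inj; rewrite !card_sum !card_prod !card_ord !card_bool; lia.
Qed.

Theorem mainTheorem7 :
  (forall n : nat, 3 <= n -> chi_dom_is (T_adj n) n.+1) /\
  (forall n : nat, 2 <= n -> chi_dom_is (O_adj n) n.+1 /\ chi_dom_is (Q_adj n) n.+1).
Proof.
split.
- move=> n Hn; split; first exact: T_upper.
  by move=> k f; apply: T_lower.
- move=> n Hn; split; split.
  + exact: O_upper.
  + by move=> k f; apply: O_lower.
  + exact: Q_upper.
  + by move=> k f; apply: Q_lower.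
Qed.
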